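(* Let $I$ be any set of nonnegative integers. Let $\mathcal A_I$ be the class of simple graphs whose degree sequence $d$ satisfies $\Delta_{m(d)}(d)\in I$, and let $\mathcal B_I$ be the class of simple graphs whose degree sequence $d$ satisfies $\Delta^*(d)\in I$. Then both $\mathcal A_I$ and $\mathcal B_I$ are closed under graph complementation. In particular (taking $\mathcal A_{\{0\}}$, $\mathcal B_{\{0\}}$, $\mathcal B_{\{0,1\}}$) the classes of split graphs, threshold graphs, and weakly threshold graphs are closed under complementation.
   Context: Degree sequences $d=(d_1,\dots,d_n)$ are listed in nonincreasing order. $m(d)=\max\{i : d_i\ge i-1\}$. For integers $k\ge 0$, $\Delta_k(d)=k(k-1)+\sum_{i>k}\min\{k,d_i\}-\sum_{i\le k}d_i$, and $\Delta^*(d)=\max\{\Delta_k(d):1\le k\le m(d)\}$. A split graph is one whose vertex set partitions into a clique and an independent set; a graph with degree sequence $d$ is split iff $\Delta_{m(d)}(d)=0$. A graph with degree sequence $d$ is threshold iff $\Delta_k(d)=0$ for all $1\le k\le m(d)$ (i.e. $\Delta^*(d)=0$). A graph is weakly threshold iff its degree sequence $d$ satisfies $\Delta_k(d)\le 1$ for all $1\le k\le m(d)$. *)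

(* Defs.v *)
From mathcomp Require Import all_boot all_order all_algebra.
Set Implicit Arguments. Unset Strict Implicit. Unset Printing Implicit Defensive.
Import Order.TTheory GRing.Theory Num.Theory.

Definition simple_graph (T : finType) (e : rel T) : Prop :=
  symmetric e /\ irreflexive e.

Definition compl_graph (T : finType) (e : rel T) : rel T :=
  fun x y => (x != y) && ~~ e x y.

Definition degree (T : finType) (e : rel T) (x : T) : nat := #|[pred y | e x y]|.

Definition deg_seq (T : finType) (e : rel T) : seq nat :=
  sort geq [seq degree e x | x <- enum T].

(* d_i with 1-based indexing: d_i = nth 0 d (i-1). *)
Definition dd (d : seq nat) (i : nat) : nat := nth 0 d i.-1.

(* m(d) = max { i : d_i >= i - 1 }, i ranging over 1..n (0 for the empty seq). *)
Definition mval (d : seq nat) : nat :=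
  \max_(1 <= i < (size d).+1 | i.-1 <= dd d i) i.

Definition Delta (d : seq nat) (k : nat) : int :=
  ((k * k.-1)%:Z + \sum_(k.+1 <= i < (size d).+1) (minn k (dd d i))%:Z
    - \sum_(1 <= i < k.+1) (dd d i)%:Z)%R.

(* Delta^*(d) = max { Delta_k(d) : 1 <= k <= m(d) }.  The seed Delta_1(d) is
   harmless since m(d) >= 1 whenever d is nonempty (and Delta_1([::]) = 0). *)
Definition DeltaStar (d : seq nat) : int :=
  \big[Order.max/Delta d 1]_(1 <= k < (mval d).+1) Delta d k.

Definition classA (I : pred nat) (T : finType) (e : rel T) : Prop :=
  exists2 n : nat, Delta (deg_seq e) (mval (deg_seq e)) = Posz n & n \in I.

Definition classB (I : pred nat) (T : finType) (e : rel T) : Prop :=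
  exists2 n : nat, DeltaStar (deg_seq e) = Posz n & n \in I.

(* Main.v *)
Require Import Defs.
From mathcomp Require Import all_boot all_order all_algebra zify.
Set Implicit Arguments. Unset Strict Implicit. Unset Printing Implicit Defensive.
Import Order.TTheory GRing.Theory Num.Theory.

Definition S1 (n : nat) (a : nat -> nat) (k : nat) := \sum_(k <= i < n) minn k (a i).
Definition S2 (a : nat -> nat) (k : nat) := \sum_(0 <= i < k) (a i - k.-1).
Definition EE n a k : int := ((S1 n a k)%:Z - (S2 a k)%:Z)%R.

Lemma rev_sum (F : nat -> nat) lo hi N : lo <= hi -> hi <= N.+1 ->
  \sum_(lo <= i < hi) F (N - i) = \sum_(N.+1 - hi <= j < N.+1 - lo) F j.
Proof.
move=> Hlo; elim: hi Hlo => [|hi IH] Hlo HN.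
  by rewrite leqn0 in Hlo; move/eqP: Hlo => ->; rewrite !big_geq.
rewrite leq_eqVlt in Hlo; case/orP: Hlo => [/eqP <-|Hlo]; first by rewrite !big_geq.
rewrite big_nat_recr //= IH //; last lia.
rewrite (@big_ltn _ _ _ (N.+1 - hi.+1)); last lia.
have -> : (N.+1 - hi.+1).+1 = N.+1 - hi by lia.
have -> : N - hi = N.+1 - hi.+1 by lia.
by rewrite addnC.
Qed.

Lemma EE_comp n a b k : (forall i, i < n -> a i <= n.-1) ->
  (forall i, i < n -> b i = n.-1 - a (n.-1 - i)) -> k <= n ->
  EE n b k = EE n a (n - k).
Proof.
move=> Ha Hb Hk.
case: n Ha Hb Hk => [|n] Ha Hb Hk.
  by move: Hk; rewrite leqn0 => /eqP ->; rewrite /EE /S1 /S2 !big_geq.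
set q := n.+1 - k.
have E1 : S1 n.+1 b k + S2 a q = q * k.
  have -> : S1 n.+1 b k = \sum_(k <= i < n.+1) minn k (n - a (n - i)).
    by apply: eq_big_nat => i Hi; rewrite Hb //; lia.
  rewrite (@rev_sum (fun j => minn k (n - a j))) //.
  rewrite subnn /S2 -big_split /=.
  have -> : q * k = \sum_(0 <= i < q) k by rewrite sum_nat_const_nat subn0.
  have -> : n.+1 - k = q by [].
  apply: eq_big_nat => i Hi.
  have := Ha i ltac:(lia). rewrite /= => Hai.
  rewrite /q; lia.
have E2 : S1 n.+1 a q + S2 b k = k * q.
  have -> : S2 b k = \sum_(0 <= i < k) (n - a (n - i) - k.-1).
    by apply: eq_big_nat => i Hi; rewrite Hb //; lia.
  rewrite (@rev_sum (fun j => n - a j - k.-1)) // subn0.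
  rewrite /S1 -big_split /=.
  have -> : k * q = \sum_(q <= i < n.+1) q by rewrite sum_nat_const_nat /q; congr (_ * _); lia.
  apply: eq_big_nat => i Hi.
  have := Ha i ltac:(lia). rewrite /= => Hai.
  rewrite /q in Hi *; lia.
rewrite /EE; lia.
Qed.

Definition nonincr n (a : nat -> nat) := forall i j, i <= j -> j < n -> a j <= a i.

Lemma EE_step n a p : nonincr n a -> p < n -> a p <= p -> (EE n a p <= EE n a (a p))%R.
Proof.
move=> Hs Hp Hap.
set k := a p.
have Hkp : k <= p := Hap.
have H1 : S1 n a k = (p - k) * k + \sum_(p <= i < n) a i.
  rewrite /S1 (@big_cat_nat _ _ _ p) //=; last lia.
  congr (_ + _).
    rewrite -sum_nat_const_nat; apply: eq_big_nat => i Hi.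
    have := Hs i p ltac:(lia) Hp; rewrite -/k; lia.
  apply: eq_big_nat => i Hi.
  have := Hs p i ltac:(lia) ltac:(lia); rewrite -/k; lia.
have H2 : S1 n a p = \sum_(p <= i < n) a i.
  rewrite /S1; apply: eq_big_nat => i Hi.
  have := Hs p i ltac:(lia) ltac:(lia); rewrite -/k; lia.
have H3 : \sum_(0 <= i < k) (a i - p.-1) <= S2 a p.
  rewrite /S2 [X in _ <= X](@big_cat_nat _ _ _ k) //=.
  exact: leq_addr.
have H4 : S2 a k <= \sum_(0 <= i < k) (a i - p.-1) + k * (p - k).
  rewrite /S2.
  have -> : k * (p - k) = \sum_(0 <= i < k) (p - k) by rewrite sum_nat_const_nat subn0.
  rewrite -big_split /= big_nat_cond [X in _ <= X]big_nat_cond.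
  apply: leq_sum => i /andP[Hi _].
  have := Hs i p ltac:(lia) Hp; rewrite -/k; lia.
rewrite /EE; lia.
Qed.

Lemma EE0 n a : EE n a 0 = 0%R.
Proof.
rewrite /EE /S1 /S2 [X in (_ - Posz X)%R]big_geq // big1 // => i _.
by rewrite min0n.
Qed.

Lemma EEn n a : (forall i, i < n -> a i <= n.-1) -> EE n a n = 0%R.
Proof.
move=> Ha; rewrite /EE /S1 /S2 big_geq // big1_seq // => i /andP[_].
rewrite mem_index_iota => Hi; have := Ha i ltac:(lia); lia.
Qed.

Lemma EE_flat n a m : nonincr n a -> 0 < m -> m <= n -> a m.-1 = m.-1 ->
  (forall i, i < m -> m.-1 <= a i) -> EE n a m = EE n a m.-1.
Proof.
move=> Hs Hm Hmn Ham Hlo.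
have H1 : S1 n a m = \sum_(m <= i < n) a i.
  rewrite /S1; apply: eq_big_nat => i Hi.
  have := Hs m.-1 i ltac:(lia) ltac:(lia); lia.
have H2 : S1 n a m.-1 = m.-1 + \sum_(m <= i < n) a i.
  rewrite /S1 big_ltn; last lia.
  have -> : m.-1.+1 = m by lia.
  congr (_ + _); first lia.
  apply: eq_big_nat => i Hi.
  have := Hs m.-1 i ltac:(lia) ltac:(lia); lia.
have H3 : S2 a m = \sum_(0 <= i < m.-1) (a i - m.-1).
  rewrite /S2 (@big_cat_nat _ _ _ m.-1) //=; last lia.
  have -> : \sum_(m.-1 <= i < m) (a i - m.-1) = 0.
    rewrite big1_seq // => i /andP[_]; rewrite mem_index_iota => Hi.
    have -> : i = m.-1 by lia.
    by rewrite Ham subnn.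
  by rewrite addn0.
have H4 : S2 a m.-1 = \sum_(0 <= i < m.-1) (a i - m.-1) + m.-1.
  rewrite /S2 (@eq_big_nat _ _ _ 0 m.-1 _ (fun i => (a i - m.-1) + 1)).
    by rewrite big_split /= sum_nat_const_nat; lia.
  move=> i Hi; have := Hlo i ltac:(lia); lia.
rewrite /EE H1 H2 H3 H4; lia.
Qed.

Section BM.
Local Open Scope ring_scope.
Lemma bm_le (F : nat -> int) (s B : int) lo hi :
  (forall k, (lo <= k < hi)%N -> F k <= B) -> s <= B ->
  \big[Order.max/s]_(lo <= i < hi) F i <= B.
Proof.
move=> HF Hs; rewrite big_nat_cond.
elim/big_ind: _ => //.
  by move=> x y Hx Hy; rewrite ge_max Hx Hy.
by move=> i /andP[Hi _]; apply: HF.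
Qed.

Lemma bm_seed (F : nat -> int) (s : int) lo hi :
  s <= \big[Order.max/s]_(lo <= i < hi) F i.
Proof.
elim/big_rec: _ => // i x _ Hx; by rewrite le_max Hx orbT.
Qed.

Lemma bm_ge_seq (F : nat -> int) (s : int) (r : seq nat) k : k \in r ->
  F k <= \big[Order.max/s]_(i <- r) F i.
Proof.
elim: r => [//|x r IH]; rewrite inE big_cons => /orP[/eqP ->|Hk].
  by rewrite le_max lexx.
by rewrite le_max IH ?orbT.
Qed.

Lemma bm_ge (F : nat -> int) (s : int) lo hi k : (lo <= k < hi)%N ->
  F k <= \big[Order.max/s]_(lo <= i < hi) F i.
Proof. by move=> Hk; apply: bm_ge_seq; rewrite mem_index_iota. Qed.
End BM.

Definition ismv n a m :=
  [/\ forall j, j < n -> j <= a j -> j < m, m <= n & forall i, i < m -> m.-1 <= a i].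

Lemma ismv_pos n a m : ismv n a m -> 0 < n -> 0 < m.
Proof. by case=> H _ _ Hn; apply: H. Qed.

Definition Mx n a m : int := \big[Order.max/EE n a 1]_(1 <= k < m.+1) EE n a k.

Lemma EE_le_Mx n a m p : nonincr n a -> (forall i, i < n -> a i <= n.-1) ->
  ismv n a m -> 0 < n -> (0 <= EE n a 1)%R -> p <= n -> (EE n a p <= Mx n a m)%R.
Proof.
move=> Hs Hb Hm Hn H1 Hp.
have Hm0 := ismv_pos Hm Hn.
case: Hm => Hm1 Hm2 Hm3.
have Hge0 : (0 <= Mx n a m)%R by apply: le_trans H1 (bm_seed _ _ _ _).
have Hin k : 1 <= k <= m -> (EE n a k <= Mx n a m)%R.
  by move=> Hk; apply: bm_ge; lia.
case: (posnP p) => [->|Hp0]; first by rewrite EE0.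
case: (leqP p m) => Hpm; first by apply: Hin; lia.
case: (ltngtP p n) => Hpn; last 1 first.
  by rewrite Hpn EEn.
  2: lia.
have Hap : a p < p.
  by rewrite ltnNge; apply/negP => H; have := Hm1 p Hpn H; lia.
apply: le_trans (EE_step Hs Hpn (ltnW Hap)) _.
have Hapm : a p <= m.
  rewrite leqNgt; apply/negP => H.
  have := Hm1 (a p) ltac:(lia) (Hs _ _ (ltnW Hap) Hpn); lia.
case: (posnP (a p)) => [->|Hap0]; first by rewrite EE0.
by apply: Hin; lia.
Qed.

Lemma sumZ (lo hi : nat) (F : nat -> nat) :
  (\sum_(lo <= i < hi) Posz (F i))%R = Posz (\sum_(lo <= i < hi) F i).
Proof. by rewrite (big_morph Posz PoszD (erefl (Posz 0))). Qed.

Lemma Delta_EE d k : k <= size d -> (forall i, i < k -> k.-1 <= nth 0 d i) ->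
  Delta d k = EE (size d) (nth 0 d) k.
Proof.
move=> Hk Hlo.
rewrite /Delta /EE /S1 /S2 !big_add1 /= !sumZ.
have -> : \sum_(k <= i < size d) minn k (dd d i.+1) = \sum_(k <= i < size d) minn k (nth 0 d i) by [].
have -> : \sum_(0 <= i < k) dd d i.+1 = \sum_(0 <= i < k) nth 0 d i by [].
have H : \sum_(0 <= i < k) nth 0 d i = \sum_(0 <= i < k) (nth 0 d i - k.-1) + k * k.-1.
  have -> : k * k.-1 = \sum_(0 <= i < k) k.-1 by rewrite sum_nat_const_nat subn0.
  rewrite -big_split /=.
  apply: eq_big_nat => i Hi; have := Hlo i ltac:(lia); lia.
rewrite H; lia.
Qed.

Lemma nonincr_sorted d : sorted geq d -> nonincr (size d) (nth 0 d).
Proof.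
move=> Hs i j Hij Hj.
have Ht : transitive geq by move=> x y z /= H1 H2; apply: leq_trans H2 H1.
have := @sorted_leq_nth _ geq Ht (fun x => leqnn x) 0 d Hs i j.
rewrite !inE /=; move=> H; apply: H => //; lia.
Qed.

Lemma nmax_ge_seq (F : nat -> nat) (P : pred nat) (r : seq nat) k : k \in r -> P k ->
  F k <= \max_(i <- r | P i) F i.
Proof.
elim: r => [//|x r IH]; rewrite inE big_cons => /orP[/eqP ->|Hk] Pk.
  by rewrite Pk leq_maxl.
case: (P x); last exact: IH.
by rewrite leq_max IH ?orbT.
Qed.

Lemma nmax_le (F : nat -> nat) (P : pred nat) lo hi B :
  (forall i, lo <= i < hi -> P i -> F i <= B) -> \max_(lo <= i < hi | P i) F i <= B.
Proof.
move=> H; rewrite big_nat_cond.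
elim/big_ind: _ => //.
  by move=> x y Hx Hy; rewrite geq_max Hx Hy.
by move=> i /andP[Hi Pi]; apply: H.
Qed.

Lemma mval_ismv d : sorted geq d -> ismv (size d) (nth 0 d) (mval d).
Proof.
move=> Hs; have Hni := nonincr_sorted Hs.
have U : forall j, j < size d -> j <= nth 0 d j -> j < mval d.
  move=> j Hj Hjd; rewrite /mval.
  have := @nmax_ge_seq id (fun i => i.-1 <= dd d i) (index_iota 1 (size d).+1) j.+1.
  apply; first by rewrite mem_index_iota; lia.
  by rewrite /dd.
split => //.
  by rewrite /mval; apply: nmax_le => i Hi _; lia.
move=> i Hi.
rewrite leqNgt; apply/negP => Hlt.
have : mval d <= (mval d).-1.
  rewrite {1}/mval; apply: nmax_le => J HJ /= HP.
  rewrite /dd in HP.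
  case: (leqP i J.-1) => HiJ; last lia.
  have := Hni i J.-1 HiJ ltac:(lia); lia.
lia.
Qed.

Lemma DeltaStar_Mx d : sorted geq d -> 0 < size d ->
  DeltaStar d = Mx (size d) (nth 0 d) (mval d).
Proof.
move=> Hs Hn; have Hm := mval_ismv Hs.
have Hm0 := ismv_pos Hm Hn.
case: Hm => _ Hm2 Hm3.
rewrite /DeltaStar /Mx Delta_EE; last 2 first.
- lia.
- move=> i _; lia.
apply: eq_big_nat => k Hk; apply: Delta_EE; first lia.
move=> i Hi; have := Hm3 i ltac:(lia); lia.
Qed.

Definition bnd n (a : nat -> nat) := forall i, i < n -> a i <= n.-1.
Definition crel n (x y : nat -> nat) := forall i, i < n -> x i = n.-1 - y (n.-1 - i).

Lemma crel_sym n x y : bnd n x -> bnd n y -> crel n x y -> crel n y x.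
Proof.
move=> Hx Hy H i Hi.
have := H (n.-1 - i) ltac:(lia); have := Hy i Hi.
have -> : n.-1 - (n.-1 - i) = i by lia.
lia.
Qed.

Lemma Mx_le n x y mx my : 0 < n -> nonincr n x -> nonincr n y -> bnd n x -> bnd n y ->
  crel n x y -> ismv n x mx -> ismv n y my -> (0 <= EE n y 1)%R ->
  (Mx n x mx <= Mx n y my)%R.
Proof.
move=> Hn Hsx Hsy Hbx Hby Hc Hmx Hmy H1.
have Hb : forall k, k <= n -> EE n x k = EE n y (n - k).
  by move=> k Hk; apply: EE_comp.
case: (Hmx) => _ Hmx2 _.
apply: bm_le.
  move=> k Hk; rewrite Hb; last lia.
  apply: EE_le_Mx => //; lia.
rewrite Hb; last lia.
apply: EE_le_Mx => //; lia.
Qed.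

Lemma Delta_m_eq n x y mx my : 0 < n -> nonincr n x -> bnd n x -> bnd n y ->
  crel n y x -> ismv n x mx -> ismv n y my -> EE n x mx = EE n y my.
Proof.
move=> Hn Hsx Hbx Hby Hc Hmx Hmy.
have Hmx0 := ismv_pos Hmx Hn; have Hmy0 := ismv_pos Hmy Hn.
case: (Hmx) => Hx1 Hx2 Hx3; case: (Hmy) => Hy1 Hy2 Hy3.
rewrite (@EE_comp n x y my) //.
have L1 : n - mx <= my.
  case: (ltnP mx n) => Hmn; last lia.
  have Hxm : x mx < mx by rewrite ltnNge; apply/negP => H; have := Hx1 mx Hmn H; lia.
  have := Hy1 (n - mx).-1 ltac:(lia).
  rewrite Hc; last lia.
  have -> : n.-1 - (n - mx).-1 = mx by lia.
  move=> H; have := H ltac:(lia); lia.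
have L2 : my <= n - mx + 1.
  rewrite leqNgt; apply/negP => H.
  have := Hy3 my.-1 ltac:(lia); rewrite Hc; last lia.
  have := Hx3 (n.-1 - my.-1) ltac:(lia); lia.
case: (ltngtP my (n - mx)) => Hc2; first lia.
  have Hq : n - my = mx.-1 by lia.
  rewrite Hq EE_flat //.
  have := Hy3 (n - mx) ltac:(lia); rewrite Hc; last lia.
  have := Hx3 mx.-1 ltac:(lia).
  have -> : n.-1 - (n - mx) = mx.-1 by lia.
  have := Hbx mx.-1 ltac:(lia); rewrite /bnd; lia.
by rewrite Hc2; congr EE; lia.
Qed.

Section Graph.
Variables (T : finType) (e : rel T).
Hypothesis He : simple_graph e.

Lemma deg_le x : degree e x <= #|T|.-1.
Proof.
case: He => _ Hirr.
have H1 : degree e x + #|[predC [pred y | e x y]]| = #|T| := cardC _.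
rewrite (cardD1 x [predC [pred y | e x y]]) !inE Hirr /= in H1; move: H1; set c := #|[predD1 _ & _]|; set N := #|T|; set dg := degree e x; lia.
Qed.

Lemma deg_compl x : degree (compl_graph e) x = #|T|.-1 - degree e x.
Proof.
case: He => _ Hirr.
have H1 : degree e x + #|[predC [pred y | e x y]]| = #|T| := cardC _.
rewrite (cardD1 x [predC [pred y | e x y]]) !inE Hirr /= in H1.
have H2 : #|[predD1 [predC [pred y | e x y]] & x]| = degree (compl_graph e) x.
  apply: eq_card => y; rewrite !inE /compl_graph eq_sym; by case: (y == x).
move: H1 H2; set c := #|[predD1 _ & _]|; set N := #|T|; set dg := degree e x; set dc := degree _ x; lia.
Qed.

Lemma size_deg_seq : size (deg_seq e) = #|T|.
Proof. by rewrite /deg_seq size_sort size_map -cardT. Qed.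

Lemma sorted_deg_seq (f : rel T) : sorted geq (deg_seq f).
Proof. by apply: sort_sorted => x y; exact: leq_total. Qed.

Definition comp (d : seq nat) := map (fun x => (size d).-1 - x) (rev d).

Lemma deg_seq_compl : deg_seq (compl_graph e) = comp (deg_seq e).
Proof.
have Ht : transitive geq by move=> x y z /= H1 H2; apply: leq_trans H2 H1.
have Ha : antisymmetric geq by move=> x y /andP[H1 H2]; apply/eqP; rewrite eqn_leq; rewrite /= in H1 H2; by rewrite H1 H2.
apply: (sorted_eq Ht Ha); first exact: sorted_deg_seq.
  rewrite /comp; apply: (@homo_sorted _ _ _ leq).
    by move=> x y Hxy /=; apply: leq_sub2l.
  rewrite rev_sorted; exact: sorted_deg_seq.
rewrite /deg_seq /comp size_sort size_map -cardT perm_sort.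
rewrite (eq_map deg_compl) map_comp.
apply: perm_map.
by rewrite perm_sym perm_rev perm_sort.
Qed.

Lemma bnd_deg_seq : bnd #|T| (nth 0 (deg_seq e)).
Proof.
move=> i Hi.
have : nth 0 (deg_seq e) i \in deg_seq e by rewrite mem_nth // size_deg_seq.
rewrite /deg_seq mem_sort => /mapP [x _ ->].
exact: deg_le.
Qed.

Lemma EE1_deg_seq : 0 < #|T| -> (0 <= EE #|T| (nth 0 (deg_seq e)) 1)%R.
Proof.
case: He => Hsym Hirr Hn.
set d := deg_seq e.
have : nth 0 d 0 \in d by rewrite mem_nth // size_deg_seq.
rewrite {1}/d /deg_seq mem_sort => /mapP [v0 _ Hv0].
rewrite -/(deg_seq e) -/d in Hv0.
have Hsum : \sum_(0 <= i < #|T|) minn 1 (nth 0 d i) = \sum_v minn 1 (degree e v).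
  rewrite -size_deg_seq -(big_nth 0 xpredT (fun x => minn 1 x)).
  rewrite /d /deg_seq (perm_big _ (permEl (perm_sort _ _))) big_map big_enum //.
have Hcard : (0 < degree e v0) -> degree e v0 + 1 <= \sum_v minn 1 (degree e v).
  move=> Hpos.
  have -> : degree e v0 + 1 = #|[predU1 v0 & [pred y | e v0 y]]|.
    by rewrite cardU1 !inE Hirr /degree addnC.
  rewrite -sum1_card big_mkcond /=; apply: leq_sum => v _.
  case: ifP => //; rewrite !inE => /orP[/eqP ->|Hv]; first by lia.
  have : 0 < degree e v.
    rewrite /degree (cardD1 v0) !inE Hsym Hv; lia.
  lia.
rewrite big_ltn // in Hsum.
rewrite /EE /S1 /S2 big_nat1 subn0.
rewrite -Hv0 in Hcard.
move: Hsum Hcard.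
set S := \sum_(1 <= i < _) _; set Tt := \sum_v _; set a0 := nth 0 d 0.
move=> Hsum Hcard.
case: (posnP a0) => Hp.
  by rewrite Hp; lia.
have := Hcard Hp; lia.
Qed.
End Graph.

Lemma simple_compl (T : finType) (e : rel T) : simple_graph e -> simple_graph (compl_graph e).
Proof.
case=> Hs Hi; split.
  by move=> x y; rewrite /compl_graph eq_sym Hs.
by move=> x; rewrite /compl_graph eqxx.
Qed.

Lemma comp_nth (d : seq nat) i : i < size d ->
  nth 0 (comp d) i = (size d).-1 - nth 0 d ((size d).-1 - i).
Proof.
move=> Hi; rewrite /comp (nth_map 0); last by rewrite size_rev.
rewrite nth_rev //; congr (_ - nth 0 d _); lia.
Qed.

Theorem corollary11 (I : pred nat) (T : finType) (e : rel T) :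
  simple_graph e ->
  (classA I e -> classA I (compl_graph e)) /\
  (classB I e -> classB I (compl_graph e)).
Proof.
move=> He.
have Hc := simple_compl He.
set d := deg_seq e.
have Hdc : deg_seq (compl_graph e) = comp d by exact: deg_seq_compl.
case: (posnP #|T|) => Hn.
  have Hd0 : d = [::] by apply: size0nil; rewrite size_deg_seq.
  have Hdc0 : deg_seq (compl_graph e) = [::] by rewrite Hdc Hd0.
  by rewrite /classA /classB Hdc0 -/d Hd0.
set n := #|T|.
have Hsd : size d = n by exact: size_deg_seq.
have Hsdc : size (deg_seq (compl_graph e)) = n by exact: size_deg_seq.
set x := nth 0 d.
set y := nth 0 (deg_seq (compl_graph e)).
have Hcr : crel n y x.
  move=> i Hi; rewrite /y Hdc comp_nth; last by rewrite Hsd.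
  by rewrite Hsd.
have Hbx : bnd n x := bnd_deg_seq He.
have Hby : bnd n y := bnd_deg_seq Hc.
have Hsx : nonincr n x by rewrite -Hsd; exact: nonincr_sorted (sorted_deg_seq e).
have Hsy : nonincr n y by rewrite -Hsdc; exact: nonincr_sorted (sorted_deg_seq _).
have Hmx : ismv n x (mval d) by rewrite -Hsd; exact: mval_ismv (sorted_deg_seq e).
have Hmy : ismv n y (mval (deg_seq (compl_graph e))).
  by rewrite -Hsdc; exact: mval_ismv (sorted_deg_seq _).
have H1x : (0 <= EE n x 1)%R := EE1_deg_seq He Hn.
have H1y : (0 <= EE n y 1)%R := EE1_deg_seq Hc Hn.
have DA : forall f : rel T, simple_graph f -> Delta (deg_seq f) (mval (deg_seq f)) =
    EE n (nth 0 (deg_seq f)) (mval (deg_seq f)).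
  move=> f Hf; have Hm := mval_ismv (sorted_deg_seq f).
  case: (Hm) => _ Hm2 Hm3.
  rewrite size_deg_seq in Hm2.
  rewrite Delta_EE ?size_deg_seq //.
have EA : Delta d (mval d) = Delta (deg_seq (compl_graph e)) (mval (deg_seq (compl_graph e))).
  rewrite DA // DA //.
  apply: Delta_m_eq => //.
have EB : DeltaStar d = DeltaStar (deg_seq (compl_graph e)).
  rewrite !DeltaStar_Mx ?Hsd ?Hsdc //; try exact: sorted_deg_seq.
  apply: le_anti; apply/andP; split.
    apply: Mx_le => //; exact: crel_sym.
  by apply: Mx_le.
split.
  by case=> k Hk Hki; exists k => //; rewrite -EA.
by case=> k Hk Hki; exists k => //; rewrite -EB.
Qed.
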